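(* Let $G$ be a finite group. (a) Every element of $G$ of prime order is an isolated vertex of the undeleted difference graph of $G$. (b) If every non-identity element of $G$ has prime order, then $\mathcal{D}(G)$ is null (has no edges).
   Context: For a finite group $G$ with identity $e$: the intersection power graph $\mathcal{G}_I(G)$ has vertex set $G$, two distinct non-identity vertices $x,y$ being adjacent iff $\langle x\rangle\cap\langle y\rangle\neq\{e\}$, and $e$ being adjacent to every other vertex. The power graph $\mathcal{P}(G)$ has vertex set $G$, two distinct vertices being adjacent iff one is a power of the other. The undeleted difference graph of $G$ has vertex set $G$ and edge set $E(\mathcal{G}_I(G))\setminus E(\mathcal{P}(G))$; the difference graph $\mathcal{D}(G)$ is obtained from it by deleting all isolated vertices. *)

(* Defs.v *)
From mathcomp Require Import all_boot all_fingroup.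
Set Implicit Arguments. Unset Strict Implicit. Unset Printing Implicit Defensive.
Local Open Scope group_scope.

(* The finite group G is the whole finGroupType gT; vertices are elements of gT. *)
Section Graphs.
Variable gT : finGroupType.

Definition ipg_adj (x y : gT) : bool :=
  (x != y) &&
  [|| x == 1, y == 1 | <[x]> :&: <[y]> != 1].

Definition pg_adj (x y : gT) : bool :=
  (x != y) && ((x \in <[y]>) || (y \in <[x]>)).

Definition udiff_adj (x y : gT) : bool := ipg_adj x y && ~~ pg_adj x y.

Definition udiff_isolated (x : gT) : bool := [forall y, ~~ udiff_adj x y].

Definition diff_vertices : {set gT} := [set x | ~~ udiff_isolated x].
Definition diff_adj (x y : gT) : bool :=
  [&& x \in diff_vertices, y \in diff_vertices & udiff_adj x y].

Definition diff_null : bool := [forall x, forall y, ~~ diff_adj x y].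
End Graphs.

(* Main.v *)
Require Import Defs.
From mathcomp Require Import all_boot all_fingroup.
Local Open Scope group_scope.

Lemma key (gT : finGroupType) (x y : gT) : prime #[x] -> ~~ udiff_adj x y.
Proof.
move=> px; rewrite /udiff_adj /ipg_adj /pg_adj.
case: (x =P y) => //= _.
have x1 : (x == 1) = false.
  by apply/negbTE; apply: contraTneq px => ->; rewrite order1.
rewrite x1 /=.
case: (y =P 1) => [->|_] /=; first by rewrite group1 orbT.
apply/negP => /andP [ne /negP []].
have sH : <[x]> :&: <[y]> \subset <[x]> by apply: subsetIl.
have dv : #|<[x]> :&: <[y]>| %| #[x] by apply: cardSg.
case/primeP: px => _ /(_ _ dv) /orP [/eqP c1|/eqP cp].
  by move: ne; rewrite (card1_trivg c1) eqxx.
have e := subset_cardP cp sH.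
have : x \in <[x]> :&: <[y]> by rewrite e cycle_id.
by rewrite inE => /andP [_ ->].
Qed.

Theorem proposition2p3 (gT : finGroupType) :
  (forall x : gT, prime #[x] -> udiff_isolated x) /\
  ((forall x : gT, x != 1 -> prime #[x]) -> diff_null gT).
Proof.
split.
  by move=> x px; apply/forallP => y; apply: key.
move=> H; apply/forallP => x; apply/forallP => y.
rewrite /diff_adj; apply/negP => /and3P [_ _].
case: (x =P 1) => [->|/eqP nx]; last by apply/negP/key/H.
rewrite /udiff_adj /pg_adj /ipg_adj group1 /= andbT eqxx /=.
by case: (1 != y).
Qed.
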